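(* Let $(G_i)_{i\in I}$ be a family of convergence groups, let $G=\prod_{i\in I}G_i$ with the product convergence structure, and let $e_i: G_i\to G$ be the natural injections. If $M\subseteq \Gamma_s G$ is compact, then there is a finite set $I_0\subseteq I$ such that $\varphi\circ e_i = 0$ for all $\varphi\in M$ and all $i\in I\setminus I_0$.
   Context: All groups are abelian. A convergence group is an abelian group with a convergence structure (an assignment to each point $x$ of a collection of filters converging to $x$). This assignment must satisfy three conditions: point ultrafilters converge to their point; finite intersections of filters converging to $x$ converge to $x$; and finer filters converge. The group operation must be compatible: $\mathcal F\to x$, $\mathcal G\to y$ imply $\mathcal F-\mathcal G\to x-y$. In the product convergence structure, a filter converges iff all its coordinate projections converge. $\mathbb T=\mathbb R/\mathbb Z$. $\Gamma G$ is the group of continuous homomorphisms $G\to\mathbb T$, and $\Gamma_s G$ is $\Gamma G$ with the topology of pointwise convergence on $G$. *)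

(* Defs.v *)
From Stdlib Require Import Reals List ClassicalEpsilon.
Open Scope R_scope.

Definition is_filter {X : Type} (F : (X -> Prop) -> Prop) : Prop :=
  F (fun _ => True) /\ ~ F (fun _ => False) /\
  (forall A B, F A -> F B -> F (fun x => A x /\ B x)) /\
  (forall A B : X -> Prop, (forall x, A x -> B x) -> F A -> F B).

Definition pfilter {X : Type} (x : X) : (X -> Prop) -> Prop := fun A => A x.
Definition finter {X : Type} (F G : (X -> Prop) -> Prop) : (X -> Prop) -> Prop :=
  fun A => F A /\ G A.
Definition fmap {X Y : Type} (f : X -> Y) (F : (X -> Prop) -> Prop) : (Y -> Prop) -> Prop :=
  fun B => F (fun x => B (f x)).

Record ConvGroup := {
  cg_car :> Type;
  cg_add : cg_car -> cg_car -> cg_car;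
  cg_opp : cg_car -> cg_car;
  cg_zero : cg_car;
  cg_addA : forall x y z, cg_add x (cg_add y z) = cg_add (cg_add x y) z;
  cg_addC : forall x y, cg_add x y = cg_add y x;
  cg_add0 : forall x, cg_add cg_zero x = x;
  cg_addN : forall x, cg_add (cg_opp x) x = cg_zero;
  cg_conv : ((cg_car -> Prop) -> Prop) -> cg_car -> Prop;
  cg_conv_point : forall x, cg_conv (pfilter x) x;
  cg_conv_inter : forall F G x, is_filter F -> is_filter G ->
      cg_conv F x -> cg_conv G x -> cg_conv (finter F G) x;
  cg_conv_finer : forall F G x, is_filter F -> is_filter G ->
      (forall A, F A -> G A) -> cg_conv F x -> cg_conv G x;
  (* compatibility: F -> x, G -> y imply F - G -> x - y, where F - G is the
     filter generated by the sets A - B, A in F, B in G *)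
  cg_conv_sub : forall F G x y, is_filter F -> is_filter G ->
      cg_conv F x -> cg_conv G y ->
      cg_conv (fun C => exists A B, F A /\ G B /\
                  forall a b, A a -> B b -> C (cg_add a (cg_opp b)))
              (cg_add x (cg_opp y))
}.

(** * The circle group T = R/Z, represented by [0,1) *)
Definition T := { r : R | 0 <= r < 1 }.

Lemma frac_part_range (r : R) : 0 <= frac_part r < 1.
Proof. destruct (base_fp r) as [H1 H2]. split; [apply Rge_le; exact H1 | exact H2]. Qed.

Definition Tadd (a b : T) : T :=
  exist _ (frac_part (proj1_sig a + proj1_sig b)) (frac_part_range _).

Lemma zero_range : 0 <= 0 < 1.
Proof. split; [apply Rle_refl | apply Rlt_0_1]. Qed.

Definition Tzero : T := exist _ 0 zero_range.

Definition Tdist (a b : T) : R :=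
  Rmin (Rabs (proj1_sig a - proj1_sig b)) (1 - Rabs (proj1_sig a - proj1_sig b)).

Definition Tconv (F : (T -> Prop) -> Prop) (t : T) : Prop :=
  forall eps, 0 < eps -> F (fun s => Tdist s t < eps).

Definition prodG {I : Type} (G : I -> ConvGroup) : Type := forall i, G i.

Definition prod_add {I : Type} (G : I -> ConvGroup) (x y : prodG G) : prodG G :=
  fun i => cg_add (G i) (x i) (y i).

Definition prod_zero {I : Type} (G : I -> ConvGroup) : prodG G :=
  fun i => cg_zero (G i).

Definition prod_conv {I : Type} (G : I -> ConvGroup)
    (F : (prodG G -> Prop) -> Prop) (x : prodG G) : Prop :=
  forall i, cg_conv (G i) (fmap (fun y : prodG G => y i) F) (x i).

Definition inj {I : Type} (G : I -> ConvGroup) (i : I) (g : G i) : prodG G :=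
  fun j => match excluded_middle_informative (i = j) with
           | left h => eq_rect i (fun k => cg_car (G k)) g j h
           | right _ => cg_zero (G j)
           end.

Definition in_Gamma_prod {I : Type} (G : I -> ConvGroup) (phi : prodG G -> T) : Prop :=
  (forall x y, phi (prod_add G x y) = Tadd (phi x) (phi y)) /\
  (forall F x, is_filter F -> prod_conv G F x -> Tconv (fmap phi F) (phi x)).

Definition pw_open {X : Type} (O : (X -> T) -> Prop) : Prop :=
  forall phi, O phi -> exists (xs : list X) (eps : R), 0 < eps /\
    forall psi, (forall x, In x xs -> Tdist (psi x) (phi x) < eps) -> O psi.

Definition pw_compact {X : Type} (M : (X -> T) -> Prop) : Prop :=
  forall (J : Type) (U : J -> (X -> T) -> Prop),
    (forall j, pw_open (U j)) ->
    (forall phi, M phi -> exists j, U j phi) ->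
    exists js : list J, forall phi, M phi -> exists j, In j js /\ U j phi.

(* Main.v *)
Require Import Defs.
From Stdlib Require Import Reals List.
From Stdlib Require Import Lra Lia ZArith Classical ClassicalEpsilon FunctionalExtensionality ProofIrrelevance.
Open Scope R_scope.

Lemma frac_char (x r : R) (n : Z) : x = IZR n + r -> 0 <= r < 1 -> frac_part x = r.
Proof.
  intros Hx [H0 H1]. unfold frac_part, Int_part.
  rewrite <- (tech_up x (n+1)).
  - rewrite minus_IZR, plus_IZR. simpl. lra.
  - rewrite plus_IZR. simpl. lra.
  - rewrite plus_IZR. simpl. lra.
Qed.

Lemma frac_decomp x : x = IZR (Int_part x) + frac_part x.
Proof. unfold frac_part. ring. Qed.

Lemma frac_rng x : 0 <= frac_part x < 1.
Proof. exact (frac_part_range x). Qed.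

Lemma frac_shift x n : frac_part (x + IZR n) = frac_part x.
Proof.
  apply frac_char with (n := (Int_part x + n)%Z); [|apply frac_rng].
  rewrite plus_IZR. pose proof (frac_decomp x). lra.
Qed.

Lemma frac_add_frac a b : frac_part (a + frac_part b) = frac_part (a + b).
Proof.
  replace (a + frac_part b) with ((a + b) + IZR (- Int_part b)).
  - apply frac_shift.
  - rewrite opp_IZR. unfold frac_part. ring.
Qed.

Lemma frac_frac x : frac_part (frac_part x) = frac_part x.
Proof. apply frac_char with (n := 0%Z); [simpl; ring | apply frac_rng]. Qed.

Lemma frac_id x : 0 <= x < 1 -> frac_part x = x.
Proof. intros H. apply frac_char with (n := 0%Z); [simpl; ring | exact H]. Qed.

Definition dist0 (x : R) : R := Rmin (frac_part x) (1 - frac_part x).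

Lemma D1 x n : dist0 x <= Rabs (x - IZR n).
Proof.
  unfold dist0. pose proof (frac_decomp x) as E. pose proof (frac_rng x).
  set (a := frac_part x) in *. set (k := Int_part x) in *.
  replace (x - IZR n) with (a + IZR (k - n)) by (rewrite minus_IZR; lra).
  destruct (Z_le_gt_dec 0 (k - n)) as [Hm|Hm].
  - apply IZR_le in Hm. rewrite Rabs_right by lra.
    apply Rle_trans with a; [apply Rmin_l | lra].
  - assert (IZR (k - n) <= -1) by (apply IZR_le; lia).
    rewrite Rabs_left by lra.
    apply Rle_trans with (1 - a); [apply Rmin_r | lra].
Qed.

Lemma D2 x : exists n, dist0 x = Rabs (x - IZR n).
Proof.
  unfold dist0. pose proof (frac_decomp x) as E. pose proof (frac_rng x).
  set (a := frac_part x) in *. set (k := Int_part x) in *.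
  destruct (Rle_dec a (1 - a)).
  - exists k. rewrite Rmin_left by lra. rewrite Rabs_right by lra. lra.
  - exists (k + 1)%Z. rewrite Rmin_right by lra. rewrite plus_IZR.
    rewrite Rabs_left by (simpl; lra). simpl; lra.
Qed.

Lemma Dtri x y : dist0 (x + y) <= dist0 x + dist0 y.
Proof.
  destruct (D2 x) as [n Hn]. destruct (D2 y) as [m Hm].
  rewrite Hn, Hm. eapply Rle_trans; [apply (D1 _ (n + m))|].
  rewrite plus_IZR.
  replace (x + y - (IZR n + IZR m)) with ((x - IZR n) + (y - IZR m)) by ring.
  apply Rabs_triang.
Qed.

Lemma Dneg x : dist0 (- x) <= dist0 x.
Proof.
  destruct (D2 x) as [n Hn]. rewrite Hn.
  eapply Rle_trans; [apply (D1 _ (- n))|]. rewrite opp_IZR.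
  replace (- x - - IZR n) with (- (x - IZR n)) by ring. rewrite Rabs_Ropp. lra.
Qed.

Lemma Dfrac x : dist0 (frac_part x) = dist0 x.
Proof. unfold dist0. rewrite frac_frac. reflexivity. Qed.

Lemma D0 : dist0 0 = 0.
Proof.
  unfold dist0. rewrite (frac_char 0 0 0) by (simpl; lra).
  apply Rmin_left. lra.
Qed.

Definition Tv (t : T) : R := proj1_sig t.
Lemma Tv_rng t : 0 <= Tv t < 1.
Proof. exact (proj2_sig t). Qed.

Lemma Teq (a b : T) : Tv a = Tv b -> a = b.
Proof.
  destruct a as [a Ha], b as [b Hb]. unfold Tv; simpl. intros ->.
  f_equal. apply proof_irrelevance.
Qed.

Definition dT (t : T) : R := Tdist t Tzero.

Lemma dT_eq t : dT t = dist0 (Tv t).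
Proof.
  unfold dT, Tdist, dist0. pose proof (Tv_rng t). unfold Tv in *. simpl.
  rewrite (frac_char (proj1_sig t) (proj1_sig t) 0) by (simpl; lra).
  rewrite Rminus_0_r, Rabs_right by lra. reflexivity.
Qed.

Lemma Tdist_eq a b : Tdist a b = dist0 (Tv a - Tv b).
Proof.
  unfold Tdist, dist0. pose proof (Tv_rng a). pose proof (Tv_rng b). unfold Tv in *.
  destruct (Rle_dec 0 (proj1_sig a - proj1_sig b)).
  - rewrite (frac_char _ (proj1_sig a - proj1_sig b) 0) by (simpl; lra).
    rewrite Rabs_right by lra. reflexivity.
  - rewrite (frac_char _ (proj1_sig a - proj1_sig b + 1) (-1)) by (simpl; lra).
    rewrite Rabs_left by lra. rewrite Rmin_comm. f_equal; lra.
Qed.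

Lemma Ttri a b : dT a <= Tdist a b + dT b.
Proof.
  rewrite !dT_eq, Tdist_eq.
  replace (Tv a) with ((Tv a - Tv b) + Tv b) at 1 by ring. apply Dtri.
Qed.

Lemma Tv_add a b : Tv (Tadd a b) = frac_part (Tv a + Tv b).
Proof. reflexivity. Qed.

Lemma Tri4 p s : dT s <= dT (Tadd p s) + dT p.
Proof.
  rewrite !dT_eq, Tv_add, Dfrac.
  replace (Tv s) with ((Tv p + Tv s) + - Tv p) at 1 by ring.
  eapply Rle_trans; [apply Dtri|]. pose proof (Dneg (Tv p)). lra.
Qed.

Lemma dT_zero : dT Tzero = 0.
Proof. rewrite dT_eq. apply D0. Qed.

Lemma Tadd_0 t : Tadd t Tzero = t.
Proof.
  apply Teq. rewrite Tv_add. pose proof (Tv_rng t).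
  apply frac_char with (n := 0%Z); unfold Tzero, Tv in *; simpl in *; lra.
Qed.

Lemma Tidem t : Tadd t t = t -> t = Tzero.
Proof.
  intros H. apply Teq. apply (f_equal Tv) in H. rewrite Tv_add in H.
  pose proof (Tv_rng t). unfold Tzero, Tv in *; simpl in *.
  set (a := proj1_sig t) in *.
  destruct (Rlt_dec a (1/2)).
  - rewrite (frac_char _ (a + a) 0) in H by (simpl; lra). lra.
  - rewrite (frac_char _ (a + a - 1) 1) in H by (simpl; lra). lra.
Qed.

Fixpoint Tmul (n : nat) (t : T) : T :=
  match n with O => Tzero | S n => Tadd t (Tmul n t) end.

Lemma Tv_mul n t : Tv (Tmul n t) = frac_part (INR n * Tv t).
Proof.
  induction n as [|n IH]; simpl Tmul.
  - unfold Tzero, Tv; simpl. rewrite Rmult_0_l.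
    symmetry. apply frac_char with (n := 0%Z); simpl; lra.
  - rewrite Tv_add, IH, frac_add_frac, S_INR. f_equal. ring.
Qed.

Lemma scale t : Tv t <> 0 -> exists n, 1/3 <= dT (Tmul n t).
Proof.
  intros Hne. pose proof (Tv_rng t). remember (Tv t) as a eqn:Heqa.
  assert (Ha : 0 < a) by lra.
  destruct (Rle_dec (1/3) a) as [H1|H1]; [destruct (Rle_dec a (2/3)) as [H2|H2]|].
  - exists 1%nat. rewrite dT_eq, Tv_mul, <- Heqa. simpl INR. rewrite Rmult_1_l.
    rewrite Dfrac. unfold dist0. rewrite (frac_id a) by lra.
    apply Rmin_glb; lra.
  - set (u := 1 - a). assert (Hu : 0 < u < 1/3) by (unfold u; lra).
    set (w := 1 / (3 * u)). assert (Hw : w * u = 1/3) by (unfold w; field; lra).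
    assert (Hw1 : w > 1) by (apply Rlt_gt; apply (Rmult_lt_reg_r u); lra).
    destruct (archimed w) as [A1 A2]. set (z := up w) in *.
    assert (Hz : (0 <= z)%Z) by (apply le_IZR; lra).
    exists (Z.to_nat z). rewrite dT_eq, Tv_mul, <- Heqa.
    rewrite INR_IZR_INZ, Z2Nat.id by exact Hz.
    assert (HA : IZR z * u > 1/3) by (assert (0 < (IZR z - w) * u) by (apply Rmult_lt_0_compat; lra); nra).
    assert (HB : IZR z * u <= 1/3 + u) by (assert (0 <= (w + 1 - IZR z) * u) by (apply Rmult_le_pos; lra); nra).
    rewrite Dfrac. unfold dist0.
    rewrite (frac_char _ (1 - IZR z * u) (z - 1)); [ | rewrite minus_IZR; unfold u; simpl; ring | lra].
    apply Rmin_glb; lra.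
  - assert (Hu : 0 < a < 1/3) by lra.
    set (w := 1 / (3 * a)). assert (Hw : w * a = 1/3) by (unfold w; field; lra).
    assert (Hw1 : w > 1) by (apply Rlt_gt; apply (Rmult_lt_reg_r a); lra).
    destruct (archimed w) as [A1 A2]. set (z := up w) in *.
    assert (Hz : (0 <= z)%Z) by (apply le_IZR; lra).
    exists (Z.to_nat z). rewrite dT_eq, Tv_mul, <- Heqa.
    rewrite INR_IZR_INZ, Z2Nat.id by exact Hz.
    assert (HA : IZR z * a > 1/3) by (assert (0 < (IZR z - w) * a) by (apply Rmult_lt_0_compat; lra); nra).
    assert (HB : IZR z * a <= 1/3 + a) by (assert (0 <= (w + 1 - IZR z) * a) by (apply Rmult_le_pos; lra); nra).
    rewrite Dfrac. unfold dist0. rewrite (frac_id (IZR z * a)) by lra.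
    apply Rmin_glb; lra.
Qed.

Definition prod_opp {I : Type} (G : I -> ConvGroup) (x : prodG G) : prodG G :=
  fun i => cg_opp (G i) (x i).

Fixpoint pmul {I : Type} (G : I -> ConvGroup) (n : nat) (x : prodG G) : prodG G :=
  match n with O => prod_zero G | S n => prod_add G x (pmul G n x) end.

Lemma cg_add0r (A : ConvGroup) x : cg_add A x (cg_zero A) = x.
Proof. rewrite cg_addC. apply cg_add0. Qed.

Lemma pmul_zero {I : Type} (G : I -> ConvGroup) n x j :
  x j = cg_zero (G j) -> pmul G n x j = cg_zero (G j).
Proof.
  intros Hx. induction n as [|n IH]; simpl.
  - reflexivity.
  - unfold prod_add. rewrite Hx, IH. apply cg_add0.
Qed.

Lemma gam_zero {I : Type} (G : I -> ConvGroup) phi :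
  in_Gamma_prod G phi -> phi (prod_zero G) = Tzero.
Proof.
  intros [Hh _]. apply Tidem. rewrite <- Hh. f_equal.
  apply functional_extensionality_dep. intro i. unfold prod_add, prod_zero. apply cg_add0.
Qed.

Lemma gam_mul {I : Type} (G : I -> ConvGroup) phi n x :
  in_Gamma_prod G phi -> phi (pmul G n x) = Tmul n (phi x).
Proof.
  intros Hg. induction n as [|n IH]; simpl.
  - apply gam_zero; exact Hg.
  - destruct Hg as [Hh _]. rewrite Hh, IH. reflexivity.
Qed.

Lemma is_filter_pfilter {X : Type} (x : X) : is_filter (pfilter x).
Proof.
  unfold is_filter, pfilter. repeat split; auto.
Qed.

Lemma is_filter_fmap {X Y : Type} (f : X -> Y) F : is_filter F -> is_filter (fmap f F).
Proof.
  unfold is_filter, fmap. intros (H1 & H2 & H3 & H4). repeat split.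
  - exact H1.
  - exact H2.
  - intros A B HA HB. apply H3; assumption.
  - intros A B HAB HA. eapply H4; [|exact HA]. intros x; apply HAB.
Qed.

Definition Nfilt {I : Type} (G : I -> ConvGroup) (A : prodG G -> Prop) : Prop :=
  exists J : list I, forall x : prodG G, (forall j, In j J -> x j = cg_zero (G j)) -> A x.

Lemma is_filter_N {I : Type} (G : I -> ConvGroup) : is_filter (Nfilt G).
Proof.
  unfold is_filter, Nfilt. repeat split.
  - exists nil. auto.
  - intros [J HJ]. apply (HJ (prod_zero G)). intros; reflexivity.
  - intros A B [J1 H1] [J2 H2]. exists (J1 ++ J2). intros x Hx. split.
    + apply H1. intros j Hj. apply Hx. apply in_or_app. auto.
    + apply H2. intros j Hj. apply Hx. apply in_or_app. auto.
  - intros A B HAB [J HJ]. exists J. intros x Hx. apply HAB, HJ, Hx.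
Qed.

Lemma L1 {I : Type} (G : I -> ConvGroup) phi :
  in_Gamma_prod G phi -> exists J : list I, forall x : prodG G,
    (forall j, In j J -> x j = cg_zero (G j)) -> phi x = Tzero.
Proof.
  intros Hg. pose proof Hg as [Hh Hc].
  assert (Hconv : prod_conv G (Nfilt G) (prod_zero G)).
  { intros i. apply cg_conv_finer with (F := pfilter (prod_zero G i)).
    - apply is_filter_pfilter.
    - apply is_filter_fmap, is_filter_N.
    - intros A HA. unfold fmap, Nfilt. exists (i :: nil). intros x Hx.
      rewrite Hx by (left; reflexivity). exact HA.
    - apply cg_conv_point. }
  specialize (Hc _ _ (is_filter_N G) Hconv (1/3) ltac:(lra)).
  unfold fmap, Nfilt in Hc. destruct Hc as [J HJ]. exists J.
  intros x Hx. rewrite (gam_zero G phi Hg) in HJ.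
  destruct (Req_dec (Tv (phi x)) 0) as [E|E].
  - apply Teq. rewrite E. reflexivity.
  - exfalso. destruct (scale _ E) as [n Hn].
    rewrite <- (gam_mul G phi n x Hg) in Hn.
    specialize (HJ (pmul G n x)). unfold dT in Hn.
    assert (Tdist (phi (pmul G n x)) Tzero < 1/3).
    { apply HJ. intros j Hj. apply pmul_zero, Hx, Hj. }
    lra.
Qed.

Lemma L1' {I : Type} (G : I -> ConvGroup) phi (J : list I) :
  in_Gamma_prod G phi ->
  (forall x : prodG G, (forall j, In j J -> x j = cg_zero (G j)) -> phi x = Tzero) ->
  forall a b : prodG G, (forall j, In j J -> a j = b j) -> phi a = phi b.
Proof.
  intros [Hh _] HJ a b Hab.
  assert (E : a = prod_add G b (prod_add G a (prod_opp G b))).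
  { apply functional_extensionality_dep. intro i. unfold prod_add, prod_opp.
    rewrite (cg_addC _ (a i)), cg_addA, (cg_addC _ (b i)), cg_addN, cg_add0. reflexivity. }
  rewrite E at 1. rewrite Hh, (HJ (prod_add G a (prod_opp G b))), Tadd_0; [reflexivity|].
  intros j Hj. unfold prod_add, prod_opp. rewrite Hab by exact Hj.
  rewrite cg_addC. apply cg_addN.
Qed.

Fixpoint Pp {I : Type} (G : I -> ConvGroup) (ph : nat -> prodG G -> T) (y : nat -> prodG G)
  (N k : nat) : prodG G :=
  let prev := match k with O => prod_zero G | S k' => Pp G ph y N k' end in
  if Nat.ltb k N then prod_zero G
  else if Rle_dec (1/6) (dT (ph k prev)) then prev else prod_add G prev (y k).

Definition xN {I : Type} (G : I -> ConvGroup) (i_ : nat -> I) (ph : nat -> prodG G -> T)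
  (y : nat -> prodG G) (N : nat) : prodG G :=
  fun j => match excluded_middle_informative (exists l, i_ l = j) with
           | left h => Pp G ph y N (proj1_sig (constructive_indefinite_description _ h)) j
           | right _ => cg_zero (G j)
           end.

Lemma list_max_ge (l : list nat) n : In n l -> (n <= fold_right Nat.max 0 l)%nat.
Proof.
  induction l as [|a l IH]; simpl; [tauto|].
  intros [->|H]; [lia|]. specialize (IH H). lia.
Qed.

Lemma hump (I : Type) (G : I -> ConvGroup) (M : (prodG G -> T) -> Prop)
  (HM : forall phi, M phi -> in_Gamma_prod G phi)
  (Hc : pw_compact M)
  (Jf : (prodG G -> T) -> list I)
  (HJf : forall phi, M phi -> forall x : prodG G,
      (forall j, In j (Jf phi) -> x j = cg_zero (G j)) -> phi x = Tzero)
  (i_ : nat -> I) (ph : nat -> prodG G -> T) (y : nat -> prodG G)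
  (P1 : forall k, M (ph k))
  (P2 : forall k l, i_ k = i_ l -> k = l)
  (P3 : forall k j, j <> i_ k -> y k j = cg_zero (G j))
  (P4 : forall k, 1/3 <= dT (ph k (y k)))
  (P5 : forall k l, (k < l)%nat -> ~ In (i_ l) (Jf (ph k))) : False.
Proof.
  set (P := Pp G ph y). set (x := xN G i_ ph y).
  assert (Plt : forall N k, (k < N)%nat -> P N k = prod_zero G).
  { intros N k Hk. unfold P. destruct k; simpl;
    (replace (Nat.ltb _ N) with true by (symmetry; apply Nat.ltb_lt; exact Hk)); reflexivity. }
  assert (Pstep : forall N k, (N <= S k)%nat -> forall j, i_ (S k) <> j ->
             P N (S k) j = P N k j).
  { intros N k Hk j Hj. unfold P. simpl.
    replace (Nat.ltb (S k) N) with false by (symmetry; apply Nat.ltb_ge; exact Hk).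
    destruct (Rle_dec _ _); [reflexivity|].
    unfold prod_add. rewrite P3 by (intro E; apply Hj; symmetry; exact E). apply cg_add0r. }
  assert (Pstable : forall N j m k, (m <= k)%nat ->
            (forall l, (m < l <= k)%nat -> i_ l <> j) -> P N k j = P N m j).
  { intros N j m k Hmk. induction k as [|k IH]; intros Hl.
    - replace m with 0%nat by lia. reflexivity.
    - destruct (Nat.eq_dec m (S k)) as [->|Hne]; [reflexivity|].
      destruct (Nat.lt_ge_cases (S k) N) as [HN|HN].
      + rewrite !Plt by lia. reflexivity.
      + rewrite Pstep by (try apply Hl; lia). apply IH; [lia|]. intros l Hl'. apply Hl. lia. }
  assert (Pzero : forall N j k, (forall l, (l <= k)%nat -> i_ l <> j) -> P N k j = cg_zero (G j)).
  { intros N j k. induction k as [|k IH]; intros Hl.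
    - unfold P. simpl. destruct (Nat.ltb 0 N); [reflexivity|].
      destruct (Rle_dec _ _); [reflexivity|].
      unfold prod_add, prod_zero. rewrite P3 by (intro E; apply (Hl 0%nat); [lia|symmetry; exact E]).
      apply cg_add0.
    - destruct (Nat.lt_ge_cases (S k) N) as [HN|HN].
      + rewrite Plt by lia. reflexivity.
      + rewrite Pstep by (try apply Hl; lia). apply IH. intros l Hl'. apply Hl. lia. }
  assert (x_agree : forall N k j, (forall l, (k < l)%nat -> i_ l <> j) -> x N j = P N k j).
  { intros N k j Hl. unfold x, xN. destruct (excluded_middle_informative _) as [h|h].
    - destruct (constructive_indefinite_description _ h) as [l0 Hl0]. simpl.
      destruct (Nat.le_gt_cases l0 k) as [Hle|Hgt].
      + symmetry. apply Pstable; [exact Hle|]. intros l Hl' E.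
        rewrite <- Hl0 in E. apply P2 in E. lia.
      + exfalso. exact (Hl l0 Hgt Hl0).
    - symmetry. apply Pzero. intros l _ E. apply h. exists l. exact E. }
  assert (x_zero : forall N j, (forall l, (N <= l)%nat -> i_ l <> j) -> x N j = cg_zero (G j)).
  { intros N j Hl. unfold x, xN. destruct (excluded_middle_informative _) as [h|h]; [|reflexivity].
    destruct (constructive_indefinite_description _ h) as [l0 Hl0]. simpl.
    destruct (Nat.lt_ge_cases l0 N) as [Hlt|Hge].
    - unfold P in Plt. rewrite Plt by exact Hlt. reflexivity.
    - exfalso. exact (Hl l0 Hge Hl0). }
  assert (Pgood : forall N k, (N <= k)%nat -> 1/6 <= dT (ph k (P N k))).
  { intros N k Hk. unfold P.
    destruct k as [|k]; simpl;
    (replace (Nat.ltb _ N) with false by (symmetry; apply Nat.ltb_ge; exact Hk));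
    (destruct (Rle_dec _ _) as [Hr|Hr]; [exact Hr|]);
    (match goal with |- context [ph ?k (prod_add G ?p (y ?k))] =>
       destruct (HM _ (P1 k)) as [Hh _]; rewrite Hh;
       pose proof (Tri4 (ph k p) (ph k (y k))); pose proof (P4 k) end; lra). }
  assert (phx : forall N k, (N <= k)%nat -> ph k (x N) = ph k (P N k)).
  { intros N k Hk. apply (L1' G (ph k) (Jf (ph k)) (HM _ (P1 k)) (HJf _ (P1 k))).
    intros j Hj. apply x_agree. intros l Hl E. apply (P5 k l Hl). rewrite E. exact Hj. }
  assert (avoid : forall J : list I, exists N, forall l, (N <= l)%nat -> ~ In (i_ l) J).
  { induction J as [|a J [N1 HN1]].
    - exists 0%nat. intros l _ [].
    - destruct (classic (exists l, i_ l = a)) as [[l0 Hl0]|Hn].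
      + exists (Nat.max N1 (S l0)). intros l Hl [E|E].
        * rewrite <- Hl0 in E. apply P2 in E. lia.
        * apply (HN1 l); [lia|exact E].
      + exists N1. intros l Hl [E|E].
        * apply Hn. exists l. symmetry. exact E.
        * apply (HN1 l Hl E). }
  destruct (Hc nat (fun N phi => dT (phi (x N)) < 1/6)) as [js Hjs].
  - intros N phi Hphi. exists (x N :: nil), (1/6 - dT (phi (x N))). split; [lra|].
    intros psi Hpsi. specialize (Hpsi (x N) (or_introl eq_refl)).
    pose proof (Ttri (psi (x N)) (phi (x N))). lra.
  - intros psi Hpsi. destruct (avoid (Jf psi)) as [N HN]. exists N.
    rewrite (L1' G psi (Jf psi) (HM _ Hpsi) (HJf _ Hpsi) (x N) (prod_zero G)).
    + rewrite (gam_zero G psi (HM _ Hpsi)), dT_zero. lra.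
    + intros j Hj. apply x_zero. intros l Hl E. apply (HN l Hl). rewrite E. exact Hj.
  - set (K := fold_right Nat.max 0%nat js).
    destruct (Hjs (ph K) (P1 K)) as [N [HN Hlt]].
    pose proof (list_max_ge js N HN) as HNK. fold K in HNK.
    rewrite (phx N K HNK) in Hlt. pose proof (Pgood N K HNK). lra.
Qed.

Fixpoint Lst {I A : Type} (step : list I -> I * A) (Jf : A -> list I) (k : nat) : list I :=
  match k with
  | O => nil
  | S k => Lst step Jf k ++ (fst (step (Lst step Jf k)) :: Jf (snd (step (Lst step Jf k))))
  end.

Lemma Lst_mono {I A : Type} (step : list I -> I * A) (Jf : A -> list I) k l :
  (k <= l)%nat -> forall a, In a (Lst step Jf k) -> In a (Lst step Jf l).
Proof.
  induction 1 as [|l Hl IH]; [auto|]. intros a Ha. simpl. apply in_or_app. left. auto.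
Qed.

Lemma inj_off {I : Type} (G : I -> ConvGroup) i g j : j <> i -> inj G i g j = cg_zero (G j).
Proof.
  intros Hj. unfold inj. destruct (excluded_middle_informative (i = j)) as [E|E].
  - exfalso. apply Hj. symmetry. exact E.
  - reflexivity.
Qed.

Theorem lemma2p8 (I : Type) (G : I -> ConvGroup) (M : (prodG G -> T) -> Prop)
  (HM : forall phi, M phi -> in_Gamma_prod G phi)
  (Hc : pw_compact M) :
  exists I0 : list I, forall phi, M phi -> forall i, ~ In i I0 ->
    forall g : G i, phi (inj G i g) = Tzero.
Proof.
  apply NNPP. intros H.
  assert (Hex : forall L : list I, exists p : I * ((prodG G -> T) * prodG G),
    M (fst (snd p)) /\ ~ In (fst p) L /\
    (forall j, j <> fst p -> snd (snd p) j = cg_zero (G j)) /\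
    1/3 <= dT (fst (snd p) (snd (snd p)))).
  { intros L. apply NNPP. intros Hn. apply H. exists L. intros phi Hphi i Hi g.
    apply NNPP. intros Hne.
    assert (E : Tv (phi (inj G i g)) <> 0).
    { intros E. apply Hne. apply Teq. rewrite E. reflexivity. }
    destruct (scale _ E) as [n Hn']. apply Hn.
    exists (i, (phi, pmul G n (inj G i g))). simpl. repeat split.
    - exact Hphi.
    - exact Hi.
    - intros j Hj. apply pmul_zero, inj_off, Hj.
    - rewrite gam_mul by (apply HM; exact Hphi). exact Hn'. }
  assert (HJex : forall phi : prodG G -> T, exists J : list I, M phi -> forall x : prodG G,
      (forall j, In j J -> x j = cg_zero (G j)) -> phi x = Tzero).
  { intros phi. destruct (classic (M phi)) as [Hm|Hm].
    - destruct (L1 G phi (HM _ Hm)) as [J HJ]. exists J. intros _. exact HJ.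
    - exists nil. intros Hm'. contradiction. }
  set (Jf := fun phi => proj1_sig (constructive_indefinite_description _ (HJex phi))).
  assert (HJf : forall phi, M phi -> forall x : prodG G,
      (forall j, In j (Jf phi) -> x j = cg_zero (G j)) -> phi x = Tzero).
  { intros phi. unfold Jf. destruct (constructive_indefinite_description _ (HJex phi)) as [J HJ].
    simpl. exact HJ. }
  set (step := fun L => proj1_sig (constructive_indefinite_description _ (Hex L))).
  assert (Hstep : forall L, M (fst (snd (step L))) /\ ~ In (fst (step L)) L /\
    (forall j, j <> fst (step L) -> snd (snd (step L)) j = cg_zero (G j)) /\
    1/3 <= dT (fst (snd (step L)) (snd (snd (step L))))).
  { intros L. unfold step. destruct (constructive_indefinite_description _ (Hex L)) as [p Hp].
    simpl. exact Hp. }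
  set (Jf' := fun a : (prodG G -> T) * prodG G => Jf (fst a)).
  set (L := Lst step Jf').
  apply (hump I G M HM Hc Jf HJf (fun k => fst (step (L k))) (fun k => fst (snd (step (L k))))
           (fun k => snd (snd (step (L k))))).
  - intros k. apply Hstep.
  - intros k l E. destruct (Nat.lt_total k l) as [Hkl|[Hkl|Hkl]]; [|exact Hkl|].
    + exfalso. apply (proj1 (proj2 (Hstep (L l)))). rewrite <- E.
      apply (Lst_mono step Jf' (S k) l Hkl). simpl. apply in_or_app. right. left. reflexivity.
    + exfalso. apply (proj1 (proj2 (Hstep (L k)))). rewrite E.
      apply (Lst_mono step Jf' (S l) k Hkl). simpl. apply in_or_app. right. left. reflexivity.
  - intros k j Hj. apply Hstep. exact Hj.
  - intros k. apply Hstep.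
  - intros k l Hkl Hin. apply (proj1 (proj2 (Hstep (L l)))).
    apply (Lst_mono step Jf' (S k) l Hkl). simpl. apply in_or_app. right. right. exact Hin.
Qed.
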